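(* In the setup below: (i) $G'$ has $p$-rank $d_p G'=s$, and $G'_{[2]}=(G')^p[G',G']$, so $(G')^{p,el}\simeq G'/G'_{[2]}$; (ii) for every $n\geq 1$, $G'_{[n]}$ is normal in $G'$, the quotient $G'_{[n]}/G'_{[n+1]}$ is an elementary abelian $p$-group, and $G'$ acts trivially by conjugation on $G'_{[n]}/G'_{[n+1]}$; (iii) each $G'_{[n]}$ is open in $G'$ and $\bigcap_n G'_{[n]}=\{1\}$.
   Context: $p$ is an odd prime; $GL_m^1=\{A\in GL_m(\mathbb Z_p): A\equiv 1\bmod p\}$. A pro-$p$ group $G$ is uniform if it is finitely generated, powerful, and with $G_1=G$, $G_{n+1}=G_n^p[G,G_n]$, the $p$-power maps $G_n/G_{n+1}\to G_{n+1}/G_{n+2}$ are isomorphisms. Let $G\subset GL_m^1$ be a closed uniform subgroup, fix $k\geq1$ and $g_1,\dots,g_s\in G_k$ whose images in $G_k/G_{k+1}$ are $\mathbb F_p$-linearly independent, let $G'$ be the closed subgroup generated by the $g_i$, and put $G'_{[n]}=G'\cap G_{n+k-1}$. For a pro-$p$ group $H$, $d_pH=\dim_{\mathbb F_p}H/H^p[H,H]$ and $H^{p,el}=H/H^p[H,H]$. *)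

(* Defs.v *)
(* GL_m(Z_p) is modelled as the inverse limit of the finite
   groups GL_m(Z/p^(n+1)Z): an element is a compatible family of matrices
   x n : 'M['Z_(p^(n+1))]_m  (level n = reduction mod p^(n+1)).
   The p-adic (profinite) topology is the one given by these levels. *)
From HB Require Import structures.
From mathcomp Require Import all_boot all_order all_algebra.
Set Implicit Arguments. Unset Strict Implicit. Unset Printing Implicit Defensive.
Import GRing.Theory.
Local Open Scope ring_scope.

Section PadicMatrixGroups.
Variables (p m : nat).

Definition fam := forall n : nat, 'M['Z_(p ^ n.+1)]_m.

Definition red (n : nat) (A : 'M['Z_(p ^ n.+2)]_m) : 'M['Z_(p ^ n.+1)]_m :=
  map_mx (fun a : 'Z_(p ^ n.+2) => (inZp (nat_of_ord a) : 'Z_(p ^ n.+1))) A.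

(* elements of GL_m(Z_p) congruent to 1 mod p *)
Definition compatible (x : fam) : Prop := forall n, red (x n.+1) = x n.
Definition GL1 (x : fam) : Prop := compatible x /\ x 0%N = 1%:M.

Definition famM (x y : fam) : fam := fun n => x n *m y n.
Definition famV (x : fam) : fam := fun n => invmx (x n).
Definition fam1 : fam := fun n => 1%:M.
Definition famX (x : fam) (k : nat) : fam := fun n => iter k (fun z => x n *m z) 1%:M.
Definition famC (x y : fam) : fam := famM (famM (famV x) (famV y)) (famM x y).
Definition famprod (l : seq fam) : fam := foldr famM fam1 l.

Definition fset := fam -> Prop.
Definition subs (A B : fset) : Prop := forall x, A x -> B x.
Definition seteq (A B : fset) : Prop := forall x, A x <-> B x.
Definition fsetI (A B : fset) : fset := fun x => A x /\ B x.
Definition fsetU (A B : fset) : fset := fun x => A x \/ B x.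

Definition subgroup (H : fset) : Prop :=
  subs H GL1 /\ H fam1 /\ (forall x y, H x -> H y -> H (famM x y)) /\
  (forall x, H x -> H (famV x)).

(* topological pclosure in GL_m^1 (p-adic topology) *)
Definition pclosure (S : fset) : fset :=
  fun x => GL1 x /\ forall n, exists y, S y /\ y n = x n.
Definition pclosed (S : fset) : Prop := seteq (pclosure S) S.

Definition gen (S : fset) : fset :=
  fun x => forall H, subgroup H -> subs S H -> H x.
Definition cgen (S : fset) : fset := pclosure (gen (fsetI S GL1)).

(* open subgroup H of the subgroup K: contains a congruence neighbourhood *)
Definition open_in (H K : fset) : Prop :=
  exists N, forall x, K x -> x N = 1%:M -> H x.

Definition normal_in (H K : fset) : Prop :=
  forall x y, K x -> H y -> H (famM (famM (famV x) y) x).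

Definition pw (H : fset) : fset := fun y => exists x, H x /\ y = famX x p.
Definition comm (H K : fset) : fset :=
  fun y => exists x z, H x /\ K z /\ y = famC x z.

Definition pcomm (K H : fset) : fset := cgen (fsetU (pw H) (comm K H)).

(* lower p-series: pser G n = G_(n+1); G_1 = G, G_(n+1) = G_n^p [G, G_n] *)
Fixpoint pser (G : fset) (n : nat) : fset :=
  if n is n'.+1 then pcomm G (pser G n') else G.
(* G_n for n >= 1 *)
Definition Gn (G : fset) (n : nat) : fset := pser G n.-1.

Definition topfingen (G : fset) : Prop :=
  exists r (f : 'I_r -> fam), seteq G (cgen (fun x => exists i, x = f i)).

(* powerful, p odd: [G,G] <= G^p (pclosed subgroups) *)
Definition powerful (G : fset) : Prop :=
  subs (cgen (comm G G)) (cgen (pw G)).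

Definition congr (N : fset) (x y : fam) : Prop := N (famM (famV y) x).

(* the p-power map G_n/G_(n+1) -> G_(n+1)/G_(n+2) is a well defined group
   isomorphism *)
Definition ppow_iso (G : fset) (n : nat) : Prop :=
  let A := Gn G n in let B := Gn G n.+1 in let C := Gn G n.+2 in
  (forall x, A x -> B (famX x p)) /\
  (forall x y, A x -> A y -> congr B x y -> congr C (famX x p) (famX y p)) /\
  (forall x y, A x -> A y ->
     congr C (famX (famM x y) p) (famM (famX x p) (famX y p))) /\
  (forall x y, A x -> A y -> congr C (famX x p) (famX y p) -> congr B x y) /\
  (forall z, B z -> exists x, A x /\ congr C (famX x p) z).

Definition uniform (G : fset) : Prop :=
  topfingen G /\ powerful G /\ forall n, (1 <= n)%N -> ppow_iso G n.

Definition lincomb (s : nat) (g : 'I_s -> fam) (e : 'I_s -> nat) : fam :=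
  famprod [seq famX (g i) (e i) | i <- enum 'I_s].

(* images of g_i in A/N are F_p-linearly independent *)
Definition lin_indep (A N : fset) (s : nat) (g : 'I_s -> fam) : Prop :=
  forall e : 'I_s -> nat, (forall i, (e i < p)%N) ->
    N (lincomb g e) -> forall i, e i = 0%N.

(* images of g_i span A/N *)
Definition spans (A N : fset) (s : nat) (g : 'I_s -> fam) : Prop :=
  forall x, A x -> exists e : 'I_s -> nat, congr N x (lincomb g e).

(* Frattini-type subgroup H^p [H,H] and H^{p,el} = H / H^p[H,H] *)
Definition Phi (H : fset) : fset := pcomm H H.

(* d_p H = s : H^{p,el} has an F_p-basis of size s *)
Definition dp_eq (H : fset) (s : nat) : Prop :=
  exists h : 'I_s -> fam, (forall i, H (h i)) /\
    lin_indep H (Phi H) h /\ spans H (Phi H) h.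

End PadicMatrixGroups.

(* Main.v *)
Require Import Defs.
From HB Require Import structures.
From mathcomp Require Import all_boot all_order all_algebra zify.
From Stdlib Require Import FunctionalExtensionality Classical ClassicalEpsilon.
From Stdlib Require List.
Set Implicit Arguments. Unset Strict Implicit. Unset Printing Implicit Defensive.
Import GRing.Theory.
Local Open Scope ring_scope.


Definition rZ (a b : nat) (x : 'Z_a) : 'Z_b := inZp (nat_of_ord x).

Section RZ.
Variables (a b : nat).
Hypotheses (b1 : (1 < b)%N) (a1 : (1 < a)%N) (ba : (b %| a)%N).

Lemma rZnat (x : 'Z_a) : rZ b x = (nat_of_ord x)%:R.
Proof. by rewrite /rZ Zp_nat. Qed.

Lemma natmodab m : ((m %% a)%:R : 'Z_b) = m%:R.
Proof. by rewrite -(Zp_nat_mod b1) modn_dvdm // Zp_nat_mod. Qed.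

Lemma valZD (u v : 'Z_a) : nat_of_ord (u + v) = ((u + v) %% a)%N.
Proof. rewrite /=; move: (_ + _)%N => w; by rewrite Zp_cast. Qed.
Lemma valZM (u v : 'Z_a) : nat_of_ord (u * v) = ((u * v) %% a)%N.
Proof. rewrite /=; move: (_ * _)%N => w; by rewrite Zp_cast. Qed.
Lemma valZN (u : 'Z_a) : nat_of_ord (- u) = ((a - u) %% a)%N.
Proof. rewrite /=; move: (nat_of_ord u) => w; by rewrite Zp_cast. Qed.
Lemma valZ1 : nat_of_ord (1 : 'Z_a) = 1%N.
Proof. by rewrite /= Zp_cast // modn_small. Qed.
Lemma valZlt (u : 'Z_a) : (nat_of_ord u < a)%N.
Proof. by have := ltn_ord u; move: (nat_of_ord u) => w; rewrite Zp_cast. Qed.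

Lemma rZ_zmod : zmod_morphism (@rZ a b).
Proof.
move=> x y; rewrite !rZnat valZD natmodab natrD valZN natmodab.
by rewrite natrB ?(ltnW (valZlt y)) // -(natmodab a) modnn add0r.
Qed.

Lemma rZ_mon : monoid_morphism (@rZ a b).
Proof.
split; first by rewrite rZnat valZ1.
by move=> x y; rewrite !rZnat valZM natmodab natrM.
Qed.

HB.instance Definition _ := GRing.isZmodMorphism.Build _ _ (@rZ a b) rZ_zmod.
HB.instance Definition _ := GRing.isMonoidMorphism.Build _ _ (@rZ a b) rZ_mon.

Lemma rZ_mxM k l q (A : 'M['Z_a]_(k, l)) (B : 'M['Z_a]_(l, q)) :
  map_mx (rZ b) (A *m B) = map_mx (rZ b) A *m map_mx (rZ b) B.
Proof. exact: map_mxM. Qed.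
Lemma rZ_mx1 k : map_mx (rZ b) (1%:M : 'M['Z_a]_k) = 1%:M.
Proof. exact: map_mx1. Qed.
Lemma rZ_mxB k l (A B : 'M['Z_a]_(k, l)) :
  map_mx (rZ b) (A - B) = map_mx (rZ b) A - map_mx (rZ b) B.
Proof. exact: map_mxB. Qed.
Lemma rZ_det k (A : 'M['Z_a]_k) : \det (map_mx (rZ b) A) = rZ b (\det A).
Proof. exact: det_map_mx. Qed.
Lemma natZ0 n : (n%:R : 'Z_b) = 0 <-> (b %| n)%N.
Proof.
have e := Zp_cast b1.
split => [h|h].
  have := congr1 val h; rewrite Zp_nat /=.
  by move: (Zp_trunc b) e => t ->; move/eqP.
apply: val_inj; rewrite Zp_nat /=.
by move: (Zp_trunc b) e => t ->; apply/eqP.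
Qed.
Lemma rZ_ker (z : 'Z_a) : rZ b z = 0 <-> (b %| nat_of_ord z)%N.
Proof. rewrite rZnat; exact: natZ0. Qed.
End RZ.



Lemma invmx_uniq (R : comUnitRingType) k (A B : 'M[R]_k) :
  A *m B = 1%:M -> invmx A = B.
Proof.
move=> h; have [uA uB] := mulmx1_unit h.
by rewrite -[invmx A]mulmx1 -h mulmxA mulVmx // mul1mx.
Qed.

Lemma invmxM (R : comUnitRingType) k (A B : 'M[R]_k) :
  A \in unitmx -> B \in unitmx -> invmx (A *m B) = invmx B *m invmx A.
Proof.
move=> uA uB; apply: invmx_uniq.
by rewrite mulmxA -(mulmxA A) mulmxV // mulmx1 mulmxV.
Qed.

Section Basic.
Variables (p m : nat).
Local Notation fam := (fam p m).
Local Notation fam1 := (fam1 p m).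

Ltac fext := let n := fresh "n" in (apply functional_extensionality_dep; intro n).

Definition U (x : fam) := forall n, x n \in unitmx.
Definition conj (c y : fam) : fam := famM (famM (famV c) y) c.

Lemma famMA (x y z : fam) : famM (famM x y) z = famM x (famM y z).
Proof. by fext; rewrite /famM mulmxA. Qed.
Lemma famM1x (x : fam) : famM fam1 x = x.
Proof. by fext; rewrite /famM /fam1 mul1mx. Qed.
Lemma famMx1 (x : fam) : famM x fam1 = x.
Proof. by fext; rewrite /famM /fam1 mulmx1. Qed.
Lemma famMVx (x : fam) : U x -> famM (famV x) x = fam1.
Proof. by move=> ux; fext; rewrite /famM /famV mulVmx ?ux. Qed.
Lemma famMxV (x : fam) : U x -> famM x (famV x) = fam1.
Proof. by move=> ux; fext; rewrite /famM /famV mulmxV ?ux. Qed.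
Lemma famVK (x : fam) : famV (famV x) = x.
Proof. by fext; rewrite /famV invmxK. Qed.
Lemma famV1 : famV fam1 = fam1.
Proof. by fext; rewrite /famV /fam1 invmx1. Qed.
Lemma famVM (x y : fam) : U x -> U y -> famV (famM x y) = famM (famV y) (famV x).
Proof. by move=> ux uy; fext; rewrite /famV /famM invmxM ?ux ?uy. Qed.
Lemma U1 : U fam1.
Proof. by move=> n; rewrite /fam1 unitmx1. Qed.
Lemma UM x y : U x -> U y -> U (famM x y).
Proof. by move=> ux uy n; rewrite /famM unitmx_mul ux uy. Qed.
Lemma UV x : U x -> U (famV x).
Proof. by move=> ux n; rewrite /famV unitmx_inv ux. Qed.
Lemma UX x k : U x -> U (famX x k).
Proof.
move=> ux; elim: k => [|k IH]; first exact: U1.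
exact: (UM ux IH).
Qed.

Lemma famX0 (x : fam) : famX x 0 = fam1.
Proof. by []. Qed.
Lemma famXS (x : fam) k : famX x k.+1 = famM x (famX x k).
Proof. by []. Qed.
Lemma famX1 (x : fam) : famX x 1 = x.
Proof. by rewrite famXS famX0 famMx1. Qed.
Lemma famXD (x : fam) a b : famX x (a + b) = famM (famX x a) (famX x b).
Proof.
elim: a => [|a IH]; first by rewrite add0n famX0 famM1x.
by rewrite addSn !famXS IH famMA.
Qed.
Lemma famXM (x : fam) a b : famX x (a * b) = famX (famX x a) b.
Proof.
elim: b => [|b IH]; first by rewrite muln0.
by rewrite mulnS famXD IH famXS.
Qed.
Lemma famX1n k : famX fam1 k = fam1.
Proof. by elim: k => // k IH; rewrite famXS IH famM1x. Qed.

Lemma conjM c x y : U c -> conj c (famM x y) = famM (conj c x) (conj c y).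
Proof.
move=> uc; rewrite /conj !famMA -(famMA c (famV c)) famMxV // famM1x //.
Qed.
Lemma conj1 c : U c -> conj c fam1 = fam1.
Proof. by move=> uc; rewrite /conj famMx1 famMVx. Qed.
Lemma conjV c x : U c -> U x -> conj c (famV x) = famV (conj c x).
Proof.
move=> uc ux; have uvc := UV uc.
by rewrite /conj (famVM (UM uvc ux) uc) (famVM uvc ux) famVK famMA.
Qed.
Lemma conjX c x k : U c -> conj c (famX x k) = famX (conj c x) k.
Proof.
move=> uc; elim: k => [|k IH]; first by rewrite !famX0 conj1.
by rewrite !famXS conjM // IH.
Qed.
Lemma conjC c x y : U c -> U x -> U y ->
  conj c (famC x y) = famC (conj c x) (conj c y).
Proof.
move=> uc ux uy; rewrite /famC !conjM ?UM ?UV // !conjV //.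
Qed.
Lemma famVC x y : U x -> U y -> famV (famC x y) = famC y x.
Proof.
move=> ux uy; have uvx := UV ux; have uvy := UV uy.
rewrite /famC (famVM (UM uvx uvy) (UM ux uy)) (famVM ux uy) (famVM uvx uvy).
by rewrite !famVK.
Qed.
Lemma famC_conj x z : famC x z = famM (conj x (famV z)) z.
Proof. by rewrite /famC /conj !famMA. Qed.
Lemma conj_eq c y : U c -> famM c (conj c y) = famM y c.
Proof. by move=> uc; rewrite /conj -!famMA famMxV // famM1x. Qed.

End Basic.

Lemma natZ1 b v : (1 < b)%N -> (v%:R : 'Z_b) = 1 -> (v %% b = 1)%N.
Proof.
move=> b1 /(congr1 val); rewrite Zp_nat /=.
by move: (Zp_trunc b) (Zp_cast b1) => t ->; rewrite (modn_small b1).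
Qed.

Lemma rZ_id a (z : 'Z_a) : rZ a z = z.
Proof. by rewrite /rZ -Zp_nat natr_Zp. Qed.

Lemma rZ_comp a b c (z : 'Z_a) : (1 < c)%N -> (1 < b)%N -> (c %| b)%N ->
  rZ c (rZ b z) = rZ c z.
Proof.
move=> c1 b1 cb; apply: val_inj; rewrite /rZ /=.
move: (Zp_trunc b) (Zp_cast b1) => t ->.
move: (Zp_trunc c) (Zp_cast c1) => t' ->.
by rewrite modn_dvdm.
Qed.

Section GL.
Variables (p m : nat).
Hypothesis p_gt1 : (1 < p)%N.
Local Notation fam := (fam p m).
Local Notation fam1 := (fam1 p m).
Local Notation U := (@U p m).
Local Notation GL1 := (@GL1 p m).

Lemma pX_gt1 u : (1 < p ^ u.+1)%N.
Proof.
rewrite expnS; apply: (leq_trans p_gt1); apply: leq_pmulr.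
by rewrite expn_gt0 (ltnW p_gt1).
Qed.
Lemma pX_dvd u n : (u <= n)%N -> (p ^ u %| p ^ n)%N.
Proof. by move=> h; rewrite dvdn_exp2l. Qed.

Lemma red_map n (A : 'M['Z_(p ^ n.+2)]_m) : red A = map_mx (rZ (p ^ n.+1)) A.
Proof. by []. Qed.

Lemma redM n (A B : 'M['Z_(p ^ n.+2)]_m) : red (A *m B) = red A *m red B.
Proof. by rewrite !red_map rZ_mxM ?pX_gt1 ?pX_dvd. Qed.
Lemma red1 n : red (1%:M : 'M['Z_(p ^ n.+2)]_m) = 1%:M.
Proof. by rewrite red_map rZ_mx1 ?pX_gt1 ?pX_dvd. Qed.

Lemma redchain (x : fam) : compatible x -> forall n,
  map_mx (rZ (p ^ 1)) (x n) = x 0%N.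
Proof.
move=> cx; elim => [|n IH].
  by apply/matrixP => i j; rewrite mxE rZ_id.
rewrite -IH -(cx n) red_map -map_mx_comp; apply/matrixP => i j.
by rewrite !mxE /= rZ_comp ?pX_gt1 ?pX_dvd.
Qed.

Lemma GL1_U (x : fam) : GL1 x -> U x.
Proof.
move=> [cx x0] n.
have hd : rZ (p ^ 1) (\det (x n)) = 1.
  by rewrite -rZ_det ?pX_gt1 ?pX_dvd // redchain // x0 det1.
rewrite unitmxE -[\det (x n)]natr_Zp unitZpE ?pX_gt1 // coprime_pexpl //.
move: hd; rewrite rZnat; move: (nat_of_ord _) => v /(natZ1 (pX_gt1 0)).
by rewrite expn1 -coprime_modr => ->; rewrite coprimen1.
Qed.

Lemma redV n (A : 'M['Z_(p ^ n.+2)]_m) : A \in unitmx -> red (invmx A) = invmx (red A).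
Proof.
move=> uA; symmetry; apply: invmx_uniq.
by rewrite -redM mulmxV // red1.
Qed.

Lemma GL1_1 : GL1 fam1.
Proof. by split => // n; rewrite /fam1 red1. Qed.
Lemma GL1_M x y : GL1 x -> GL1 y -> GL1 (famM x y).
Proof.
move=> [cx x0] [cy y0]; split; last by rewrite /famM x0 y0 mulmx1.
by move=> n; rewrite /famM redM cx cy.
Qed.
Lemma GL1_V x : GL1 x -> GL1 (famV x).
Proof.
move=> gx; have ux := GL1_U gx; case: gx => cx x0; split.
  by move=> n; rewrite /famV redV // cx.
by rewrite /famV x0 invmx1.
Qed.
Lemma GL1_X x k : GL1 x -> GL1 (famX x k).
Proof.
move=> gx; elim: k => [|k IH]; first exact: GL1_1.
exact: GL1_M.
Qed.
Lemma lvl_down x N N' : GL1 x -> x N = 1%:M -> (N' <= N)%N -> x N' = 1%:M.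
Proof.
move=> [cx _] hN; elim: N hN => [|N IH] hN.
  by rewrite leqn0 => /eqP ->.
rewrite leq_eqVlt => /orP [/eqP -> //|]; rewrite ltnS; apply: IH.
by rewrite -cx hN red1.
Qed.
Lemma agree_down x y N N' : GL1 x -> GL1 y -> x N = y N -> (N' <= N)%N -> x N' = y N'.
Proof.
move=> [cx _] [cy _] hN; elim: N hN => [|N IH] hN.
  by rewrite leqn0 => /eqP ->.
rewrite leq_eqVlt => /orP [/eqP -> //|]; rewrite ltnS; apply: IH.
by rewrite -cx -cy hN.
Qed.
End GL.


Section Groups.
Variables (p m : nat).
Hypothesis p_gt1 : (1 < p)%N.
Local Notation fam := (fam p m).
Local Notation fam1 := (fam1 p m).
Local Notation U := (@U p m).
Local Notation GL1 := (@GL1 p m).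
Local Notation fset := (fset p m).
Local Notation subgroup := (@subgroup p m).
Local Notation pclosure := (@pclosure p m).
Local Notation gen := (@gen p m).
Local Notation cgen := (@cgen p m).
Local Notation subs := (@subs p m).

Section SG.
Variable H : fset.
Hypothesis sg : subgroup H.
Lemma sg_GL1 x : H x -> GL1 x. Proof. by case: sg => h _; apply: h. Qed.
Lemma sg_U x : H x -> U x. Proof. by move=> /sg_GL1 /GL1_U; apply. Qed.
Lemma sg_1 : H fam1. Proof. by case: sg => _ []. Qed.
Lemma sg_M x y : H x -> H y -> H (famM x y). Proof. by case: sg => _ [_ []] h _; apply: h. Qed.
Lemma sg_V x : H x -> H (famV x). Proof. by case: sg => _ [_ []] _ h; apply: h. Qed.
Lemma sg_X x k : H x -> H (famX x k).
Proof. by move=> hx; elim: k => [|k IH]; [exact: sg_1 | exact: sg_M]. Qed.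
Lemma sg_conj c y : H c -> H y -> H (conj c y).
Proof. by move=> hc hy; rewrite /conj; apply: sg_M => //; apply: sg_M => //; apply: sg_V. Qed.
Lemma sg_C x y : H x -> H y -> H (famC x y).
Proof. by move=> hx hy; rewrite /famC; apply: sg_M; apply: sg_M => //; apply: sg_V. Qed.
Lemma sg_Vinv x : H (famV x) -> H x.
Proof. by move=> h; rewrite -(famVK x); apply: sg_V. Qed.
End SG.

Lemma sg_GL1set : subgroup GL1.
Proof.
split => //; split; first exact: GL1_1.
split; [exact: GL1_M | exact: GL1_V].
Qed.

Lemma conj_GL1 c y : GL1 c -> GL1 y -> GL1 (conj c y).
Proof. by move=> gc gy; rewrite /conj; apply: (GL1_M p_gt1) => //; apply: (GL1_M p_gt1) => //; apply: (GL1_V p_gt1). Qed.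
Lemma GL1_C x y : GL1 x -> GL1 y -> GL1 (famC x y).
Proof. by move=> gx gy; rewrite /famC; apply: (GL1_M p_gt1); apply: (GL1_M p_gt1) => //; apply: (GL1_V p_gt1). Qed.


Lemma pcl_sub S : subs S GL1 -> subs S (pclosure S).
Proof. by move=> h x Sx; split; [apply: h | move=> n; exists x]. Qed.
Lemma pcl_GL1 S : subs (pclosure S) GL1.
Proof. by move=> x []. Qed.
Lemma pcl_mono S T : subs S T -> subs (pclosure S) (pclosure T).
Proof.
move=> h x [gx hx]; split => // n; have [y [Sy e]] := hx n.
by exists y; split => //; apply: h.
Qed.
Lemma pcl_idem S : subs (pclosure (pclosure S)) (pclosure S).
Proof.
move=> x [gx hx]; split => // n; have [y [[_ hy] e]] := hx n.
have [z [Sz e']] := hy n; by exists z; rewrite e'.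
Qed.
Lemma pcl_sg H : subgroup H -> subgroup (pclosure H).
Proof.
move=> sg; split; first exact: pcl_GL1.
split; first by apply: pcl_sub; [exact: sg_GL1 | exact: sg_1].
split.
  move=> x y [gx hx] [gy hy]; split; first exact: GL1_M.
  move=> n; have [x' [Hx ex]] := hx n; have [y' [Hy ey]] := hy n.
  by exists (famM x' y'); split; [exact: sg_M | rewrite /famM ex ey].
move=> x [gx hx]; split; first exact: GL1_V.
move=> n; have [x' [Hx ex]] := hx n.
by exists (famV x'); split; [exact: sg_V | rewrite /famV ex].
Qed.

Lemma gen_sg S : subs S GL1 -> subgroup (gen S).
Proof.
move=> sS; split; first by move=> x; apply; [exact: sg_GL1set | ].
split; first by move=> H sH _; apply: sg_1.
split; first by move=> x y hx hy H sH SH; apply: sg_M => //; [apply: hx | apply: hy].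
by move=> x hx H sH SH; apply: sg_V => //; apply: hx.
Qed.
Lemma gen_min S H : subgroup H -> subs S H -> subs (gen S) H.
Proof. by move=> sH SH x; apply. Qed.

Lemma cgen_sg S : subgroup (cgen S).
Proof. by apply: pcl_sg; apply: gen_sg => x []. Qed.
Lemma cgen_cl S : subs (pclosure (cgen S)) (cgen S).
Proof. exact: pcl_idem. Qed.
Lemma cgen_pclosed S : pclosed (cgen S).
Proof.
move=> x; split; first exact: cgen_cl.
by apply: pcl_sub => y; apply: (sg_GL1 (cgen_sg S)).
Qed.
Lemma cgen_ext S x : S x -> GL1 x -> cgen S x.
Proof. by move=> Sx gx; split => // n; exists x; split => // H _; apply. Qed.
Lemma cgen_min S K : subgroup K -> subs (pclosure K) K ->
  subs (fsetI S GL1) K -> subs (cgen S) K.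
Proof.
move=> sK cK SK x hx; apply: cK; apply: pcl_mono hx; exact: gen_min.
Qed.

Lemma cgen_normal (K S : fset) : subgroup K ->
  (forall c y, K c -> S y -> GL1 y -> S (conj c y)) ->
  forall c y, K c -> cgen S y -> cgen S (conj c y).
Proof.
move=> sK hS c y Kc.
have gc := sg_GL1 sK Kc; have uc := GL1_U p_gt1 gc.
pose H := fun y => GL1 y /\ gen (fsetI S GL1) (conj c y).
have sH : subgroup H.
  have sg : subgroup (gen (fsetI S GL1)) by apply: gen_sg => x [].

  split; first by move=> x [].
  split; first by split; [exact: GL1_1 | rewrite conj1 //; exact: (sg_1 sg)].
  split.
    move=> a b [ga ha] [gb hb]; split; first exact: GL1_M.
    by rewrite conjM //; apply: (sg_M sg).
  move=> a [ga ha]; split; first exact: GL1_V.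
  by rewrite (conjV uc (GL1_U p_gt1 ga)); apply: (sg_V sg).
have genH : subs (gen (fsetI S GL1)) H.
  apply: gen_min => // a [Sa ga]; split => //.
  by move=> H' _ sH'; apply: sH'; split; [apply: hS | apply: conj_GL1].
move=> [gy hy]; split; first exact: conj_GL1.
move=> n; have [y' [gy' e]] := hy n.
by exists (conj c y'); split; [case: (genH _ gy') | rewrite /conj /famM /famV e].
Qed.

End Groups.


Section Pser.
Variables (p m : nat).
Hypothesis p_gt1 : (1 < p)%N.
Local Notation fam := (fam p m).
Local Notation fam1 := (fam1 p m).
Local Notation U := (@U p m).
Local Notation GL1 := (@GL1 p m).
Local Notation fset := (fset p m).
Local Notation subgroup := (@subgroup p m).
Local Notation pclosure := (@pclosure p m).
Local Notation gen := (@gen p m).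
Local Notation cgen := (@cgen p m).
Local Notation subs := (@subs p m).
Local Notation pw := (@pw p m).
Local Notation comm := (@comm p m).
Local Notation pcomm := (@pcomm p m).
Local Notation normal_in := (@normal_in p m).

Definition good (K H : fset) := subgroup H /\ subs (pclosure H) H /\ subs H K /\ normal_in H K.

Lemma pcomm_good K H : subgroup K -> good K H ->
  good K (pcomm K H) /\ subs (pcomm K H) H /\
  subs (pw H) (pcomm K H) /\ subs (comm K H) (pcomm K H).
Proof.
move=> sK [sH [cH [HK nH]]].
have gK := sg_GL1 sK; have uK := sg_U p_gt1 sK.
have gH := sg_GL1 sH; have uH := sg_U p_gt1 sH.
have hS : subs (fsetU (pw H) (comm K H)) GL1.
  move=> y [[x [Hx ->]] | [x [z [Kx [Hz ->]]]]].
    by apply: GL1_X => //; apply: gH.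
  by apply: GL1_C => //; [apply: gK | apply: gH].
have sub : subs (pcomm K H) H.
  apply: cgen_min; [exact: sH | exact: cH | ].
  move=> y [[[x [Hx ->]] | [x [z [Kx [Hz ->]]]]] _].
    exact: (sg_X sH).
  rewrite famC_conj; apply: (sg_M sH) => //.
  by apply: nH => //; apply: (sg_V sH).
split; last split => //.
  split; first exact: cgen_sg.
  split; first exact: cgen_cl.
  split; first by move=> x /sub /HK.
  move=> c y Kc; apply: (cgen_normal p_gt1 sK) => // c' y' Kc' [[x [Hx ->]]|[x [z [Kx [Hz ->]]]]] _.
    by left; exists (conj c' x); split; [apply: nH | rewrite (conjX _ _ (uK _ Kc'))].
  right; exists (conj c' x), (conj c' z); split; first exact: (sg_conj sK).
  split; first exact: nH.
  by rewrite conjC; [| apply: uK | apply: uK | apply: uH].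
split.
  by move=> y hy; apply: cgen_ext; [left | apply: hS; left].
by move=> y hy; apply: cgen_ext; [right | apply: hS; right].
Qed.

Section PS.
Variable G : fset.
Hypotheses (sG : subgroup G) (cG : pclosed G).

Lemma pser_good j : good G (pser G j).
Proof.
elim: j => [|j IH].
  split => //; split; first by move=> x /cG.
  split => //; move=> c y; exact: (sg_conj sG).
by case: (pcomm_good sG IH).
Qed.
Lemma pser_sg j : subgroup (pser G j). Proof. by case: (pser_good j). Qed.
Lemma pser_cl j : subs (pclosure (pser G j)) (pser G j). Proof. by case: (pser_good j) => _ []. Qed.
Lemma pser_G j : subs (pser G j) G. Proof. by case: (pser_good j) => _ [_ []]. Qed.
Lemma pser_nrm j : normal_in (pser G j) G. Proof. by case: (pser_good j) => _ [_ []]. Qed.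
Lemma pser_nest j : subs (pser G j.+1) (pser G j).
Proof. by case: (pcomm_good sG (pser_good j)) => _ []. Qed.
Lemma pser_pw j : subs (pw (pser G j)) (pser G j.+1).
Proof. by case: (pcomm_good sG (pser_good j)) => _ [_ []]. Qed.
Lemma pser_comm j : subs (comm G (pser G j)) (pser G j.+1).
Proof. by case: (pcomm_good sG (pser_good j)) => _ [_ []]. Qed.
Lemma pser_nest_le i j : (i <= j)%N -> subs (pser G j) (pser G i).
Proof.
move=> /subnK <-; elim: (j - i)%N => [|d IH] x; first by [].
by rewrite addSn => /pser_nest /IH.
Qed.
End PS.
End Pser.


Lemma pigeon (F : finType) (Q : nat -> F -> Prop) :
  (forall n n' phi, (n <= n')%N -> Q n' phi -> Q n phi) ->
  (forall n, exists phi, Q n phi) -> exists phi, forall n, Q n phi.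
Proof.
move=> down all.
suff H : forall (l : seq F), (forall n, exists2 phi, phi \in l & Q n phi) ->
   exists phi, forall n, Q n phi.
  apply: H (enum F) _ => n; have [phi h] := all n; exists phi => //; exact: mem_enum.
elim => [|a l IH] hl.
  by have [phi] := hl 0%N.
case: (classic (forall n, Q n a)) => [h|]; first by exists a.
move=> /not_all_ex_not [n0 hn0]; apply: IH => n.
have [phi] := hl (n + n0)%N; rewrite inE => /orP [/eqP -> h|hphi h].
  by case: hn0; apply: down h; rewrite leq_addl.
by exists phi => //; apply: down h; rewrite leq_addr.
Qed.

Ltac kk M := match goal with | |- _ (famM _ _) => apply M; kk M | _ => assumption end.
Ltac kl M KL := match goal with | |- _ (famM _ _) => apply M; kl M KL | _ => first [assumption | apply KL] end.

Section Span.
Variables (p m : nat).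
Hypothesis p_gt1 : (1 < p)%N.
Local Notation fam := (fam p m).
Local Notation fam1 := (fam1 p m).
Local Notation U := (@U p m).
Local Notation GL1 := (@GL1 p m).
Local Notation fset := (fset p m).
Local Notation subgroup := (@subgroup p m).
Local Notation pclosure := (@pclosure p m).
Local Notation gen := (@gen p m).
Local Notation cgen := (@cgen p m).
Local Notation subs := (@subs p m).
Local Notation pw := (@pw p m).
Local Notation comm := (@comm p m).
Local Notation normal_in := (@normal_in p m).
Local Notation congr := (@congr p m).

Variables (K N : fset).
Hypotheses (sK : subgroup K) (sN : subgroup N) (NK : subs N K) (nN : normal_in N K)
  (pwN : subs (pw K) N) (commN : subs (comm K K) N).

Let uK := sg_U p_gt1 sK.

Lemma cg_refl x : K x -> congr N x x.
Proof. by move=> Kx; rewrite /congr (famMVx (uK Kx)); apply: (sg_1 sN). Qed.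
Lemma cg_sym x y : K x -> K y -> congr N x y -> congr N y x.
Proof.
move=> Kx Ky h; rewrite /congr.
have -> : famM (famV x) y = famV (famM (famV y) x).
  by rewrite (famVM (UV (uK Ky)) (uK Kx)) famVK.
by apply: (sg_V sN).
Qed.
Lemma cg_trans x y z : K x -> K y -> K z -> congr N x y -> congr N y z -> congr N x z.
Proof.
move=> Kx Ky Kz h1 h2; rewrite /congr.
have -> : famM (famV z) x = famM (famM (famV z) y) (famM (famV y) x).
  by rewrite famMA -(famMA y) (famMxV (uK Ky)) famM1x.
exact: (sg_M sN).
Qed.
Lemma cg_mul x x' y y' : K x -> K x' -> K y -> K y' ->
  congr N x x' -> congr N y y' -> congr N (famM x y) (famM x' y').
Proof.
move=> Kx Kx' Ky Ky' h1 h2; rewrite /congr (famVM (uK Kx') (uK Ky')).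
have -> : famM (famM (famV y') (famV x')) (famM x y) =
          famM (conj y' (famM (famV x') x)) (famM (famV y') y).
  rewrite /conj !famMA; congr famM; congr famM; congr famM.
  by rewrite -famMA (famMxV (uK Ky')) famM1x.
by apply: (sg_M sN) => //; apply: nN.
Qed.
Lemma cg_comm x y : K x -> K y -> congr N (famM x y) (famM y x).
Proof.
move=> Kx Ky; rewrite /congr (famVM (uK Ky) (uK Kx)); apply: commN.
by exists x, y; split => //; split => //; rewrite /famC famMA.
Qed.
Lemma cg_pow x : K x -> congr N (famX x p) fam1.
Proof. by move=> Kx; rewrite /congr famV1 famM1x; apply: pwN; exists x. Qed.

Variables (r : nat) (f : 'I_r -> fam).
Hypothesis fK : forall i, K (f i).

Definition lc (l : seq 'I_r) (e : 'I_r -> nat) : fam :=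
  foldr (@famM p m) fam1 [seq famX (f i) (e i) | i <- l].

Lemma lincomb_lc e : lincomb f e = lc (enum 'I_r) e.
Proof. by []. Qed.

Lemma lc_cons i l e : lc (i :: l) e = famM (famX (f i) (e i)) (lc l e).
Proof. by []. Qed.
Lemma lc_nil e : lc [::] e = fam1.
Proof. by []. Qed.

Lemma lc_K l e : K (lc l e).
Proof.
elim: l => [|i l IH] /=; first exact: (sg_1 sK).
by apply: (sg_M sK) => //; apply: (sg_X sK).
Qed.

Lemma lc_add l e1 e2 : congr N (famM (lc l e1) (lc l e2)) (lc l (fun i => (e1 i + e2 i)%N)).
Proof.
elim: l => [|i l IH]; rewrite ?lc_nil ?lc_cons.
  by rewrite famM1x; apply: cg_refl => //; apply: (sg_1 sK).
have Ka1 := sg_X sK (e1 i) (fK i); have Ka2 := sg_X sK (e2 i) (fK i).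
have KP1 := lc_K l e1; have KP2 := lc_K l e2.
have KP := lc_K l (fun i => (e1 i + e2 i)%N).
set a1 := famX (f i) (e1 i) in Ka1 *; set a2 := famX (f i) (e2 i) in Ka2 *.
set P1 := lc l e1 in KP1 IH *; set P2 := lc l e2 in KP2 IH *.
set P := lc l _ in KP IH *.
have M := sg_M sK.
rewrite famXD -/a1 -/a2.
apply: (@cg_trans _ (famM (famM a1 a2) (famM P1 P2))); try solve [kk M].
  have -> : famM (famM a1 P1) (famM a2 P2) = famM a1 (famM (famM P1 a2) P2).
    by rewrite !famMA.
  have -> : famM (famM a1 a2) (famM P1 P2) = famM a1 (famM (famM a2 P1) P2).
    by rewrite !famMA.
  apply: cg_mul; try solve [kk M].
    exact: cg_refl.
  apply: cg_mul; try solve [kk M].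
    exact: cg_comm.
  exact: cg_refl.
apply: cg_mul; try solve [kk M].
apply: cg_refl; kk M.
Qed.

Lemma powmod x a : K x -> congr N (famX x a) (famX x (a %% p)%N).
Proof.
move=> Kx; rewrite {1}(divn_eq a p) famXD mulnC famXM.
have Kr := sg_X sK (a %% p)%N Kx.
have Nq : N (famX (famX x p) (a %/ p)%N).
  by apply: (sg_X sN); apply: pwN; exists x.
rewrite /congr.
have -> : famM (famV (famX x (a %% p)%N)) (famM (famX (famX x p) (a %/ p)%N) (famX x (a %% p)%N))
  = conj (famX x (a %% p)%N) (famX (famX x p) (a %/ p)%N) by rewrite /conj famMA.
exact: nN.
Qed.

Lemma lc_mod l e : congr N (lc l e) (lc l (fun i => (e i %% p)%N)).
Proof.
elim: l => [|i l IH]; rewrite ?lc_nil ?lc_cons; first by apply: cg_refl => //; apply: (sg_1 sK).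
apply: cg_mul => //; try apply: (sg_X sK); try apply: lc_K => //.
  by []. by []. exact: powmod.
Qed.

Lemma lc_0 l : lc l (fun _ => 0%N) = fam1.
Proof. by elim: l => // i l IH; rewrite lc_cons IH famX0 famM1x. Qed.

Lemma lc_delta l i : uniq l ->
  lc l (fun j => nat_of_bool (j == i)) = if i \in l then f i else fam1.
Proof.
elim: l => [|j l IH] // /andP [jl ul]; rewrite lc_cons IH // inE.
case: (eqVneq j i) jl => [-> | ne] jl /=.
  by rewrite (negbTE jl) famX1 famMx1.
by rewrite famX0 famM1x.
Qed.

Hypotheses (cK : subs (pclosure K) K) (cN : subs (pclosure N) N).

Definition T (y : fam) := K y /\ exists e, (forall i, (e i < p)%N) /\ congr N y (lc (enum 'I_r) e).

Lemma T_M y1 y2 : T y1 -> T y2 -> T (famM y1 y2).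
Proof.
move=> [K1 [e1 [b1 c1]]] [K2 [e2 [b2 c2]]].
have M := sg_M sK.
split; first exact: M.
exists (fun i => ((e1 i + e2 i) %% p)%N); split.
  by move=> i; rewrite ltn_pmod // ltnW.
have KL := lc_K.
apply: (@cg_trans _ (famM (lc (enum 'I_r) e1) (lc (enum 'I_r) e2))); try solve [kl M KL].
  by apply: cg_mul => //; apply: KL.
apply: (@cg_trans _ (lc (enum 'I_r) (fun i => (e1 i + e2 i)%N))); try solve [kl M KL].
  exact: lc_add.
exact: lc_mod.
Qed.

Lemma T_1 : T fam1.
Proof.
split; first exact: (sg_1 sK).
exists (fun _ => 0%N); split; first by move=> i; rewrite ltnW.
rewrite lc_0; apply: cg_refl; exact: (sg_1 sK).
Qed.

Lemma T_X y k : T y -> T (famX y k).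
Proof. by move=> Ty; elim: k => [|k IH]; [exact: T_1 | exact: T_M]. Qed.

Lemma T_V y : T y -> T (famV y).
Proof.
move=> Ty; have Ky := proj1 Ty; have uy := uK Ky.
have [KX [e [be ce]]] := T_X (p.-1) Ty.
have KV := sg_V sK Ky.
split => //; exists e; split => //.
apply: (@cg_trans _ (famX y p.-1)) => //; first exact: lc_K.
rewrite /congr -(famVM uy (UX _ uy)).
have -> : famM y (famX y p.-1) = famX y p by rewrite -famXS prednK // ltnW.
by apply: (sg_V sN); apply: pwN; exists y.
Qed.

Lemma T_f i : T (f i).
Proof.
split; first exact: fK.
exists (fun j => nat_of_bool (j == i)); split.
  by move=> j; case: (j == i) => //=; rewrite ltnW.
rewrite lc_delta ?enum_uniq // mem_enum; apply: cg_refl; exact: fK.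
Qed.

Definition Qd (x : fam) (n : nat) (phi : {ffun 'I_r -> 'I_p}) : Prop := exists y, K y /\
  congr N y (lc (enum 'I_r) (fun i => nat_of_ord (phi i))) /\ y n = x n.

Lemma span_main x : cgen (fun y => exists i, y = f i) x ->
  exists e, (forall i, (e i < p)%N) /\ congr N x (lincomb f e).
Proof.
move=> [gx hx].
have sT : subgroup T.
  split; first by move=> y [Ky _]; apply: (sg_GL1 sK).
  split; first exact: T_1.
  split; [exact: T_M | exact: T_V].
have genT : subs (gen (fsetI (fun y => exists i, y = f i) GL1)) T.
  by apply: gen_min => // y [[i ->] _]; apply: T_f.
have [phi hphi] : exists phi, forall n, Qd x n phi.
  apply: pigeon.
    move=> n n' phi le [y [Ky [cy ey]]]; exists y; split => //; split => //.
    exact: (agree_down (sg_GL1 sK Ky) gx ey le).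
  move=> n; have [y [gy ey]] := hx n; have [Ky [e [be ce]]] := genT _ gy.
  exists [ffun i => Ordinal (be i)], y; split => //; split => //.
  suff -> : (fun i => nat_of_ord ([ffun i => Ordinal (be i)] i)) = e by [].
  by apply: functional_extensionality => i; rewrite ffunE.
exists (fun i => nat_of_ord (phi i)); split; first by move=> i.
rewrite lincomb_lc; apply: cN; split.
  apply: (GL1_M p_gt1) => //; apply: (GL1_V p_gt1); apply: (sg_GL1 sK); exact: lc_K.
move=> n; have [y [Ky [cy ey]]] := hphi n.
by exists (famM (famV (lc (enum 'I_r) (fun i => nat_of_ord (phi i)))) y); split => //; rewrite /famM ey.
Qed.
End Span.


Section Kt.
Variables (p m : nat).
Hypothesis p_gt1 : (1 < p)%N.
Local Notation fam := (fam p m).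
Local Notation fam1 := (fam1 p m).
Local Notation U := (@U p m).
Local Notation GL1 := (@GL1 p m).
Local Notation subgroup := (@subgroup p m).
Local Notation pclosure := (@pclosure p m).
Local Notation subs := (@subs p m).

Definition Pdiv n u (A : 'M['Z_(p ^ n.+1)]_m) := forall i j, (p ^ u %| nat_of_ord (A i j))%N.

Lemma valZ n (z : 'Z_(p ^ n.+1)) k : nat_of_ord (z *+ k) = ((z * k) %% p ^ n.+1)%N.
Proof.
rewrite Zp_mulrn /=; move: (nat_of_ord z * k)%N => w.
by move: (Zp_trunc (p ^ n.+1)) (Zp_cast (pX_gt1 p_gt1 n)) => t ->.
Qed.
Lemma valZmul n (z1 z2 : 'Z_(p ^ n.+1)) : nat_of_ord (z1 * z2) = ((z1 * z2) %% p ^ n.+1)%N.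
Proof. by apply: valZM; apply: pX_gt1. Qed.

Lemma dvd_mod d a b : (d %| b)%N -> (d %| a %% b)%N = (d %| a)%N.
Proof. by move=> h; rewrite /dvdn modn_dvdm. Qed.

Lemma Pdiv_mulrn n u A k : (u <= n.+1)%N -> Pdiv u A -> @Pdiv n u (A *+ k).
Proof.
move=> le h i j; rewrite mulmxnE valZ dvd_mod ?dvdn_exp2l //.
exact: dvdn_mulr.
Qed.

Lemma prod0 n u v (z1 z2 : 'Z_(p ^ n.+1)) : (n.+1 <= u + v)%N ->
  (p ^ u %| z1)%N -> (p ^ v %| z2)%N -> z1 * z2 = 0.
Proof.
move=> le h1 h2; apply: ord_inj; rewrite valZmul /=; apply/eqP.
rewrite -/(dvdn _ _); apply: (dvdn_trans (dvdn_exp2l p le)).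
by rewrite expnD dvdn_mul.
Qed.

Lemma prod0_mx n u v (A B : 'M['Z_(p ^ n.+1)]_m) : (n.+1 <= u + v)%N ->
  Pdiv u A -> Pdiv v B -> A *m B = 0.
Proof.
move=> le hA hB; apply/matrixP => i j; rewrite !mxE big1 // => l _.
exact: (prod0 le).
Qed.

Lemma mulp0 n (z : 'Z_(p ^ n.+1)) : (p ^ n %| z)%N -> z *+ p = 0.
Proof.
move=> h; apply: ord_inj; rewrite valZ /=; apply/eqP; rewrite -/(dvdn _ _).
move: h; move: (nat_of_ord z) => w h; by rewrite expnSr dvdn_mul.
Qed.

Lemma red_ker s (A : 'M['Z_(p ^ s.+2)]_m) : red A = 1%:M -> Pdiv s.+1 (A - 1%:M).
Proof.
move=> h i j; have e : map_mx (rZ (p ^ s.+1)) (A - 1%:M) = 0.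
  by rewrite rZ_mxB ?pX_gt1 ?dvdn_exp2l // rZ_mx1 ?pX_gt1 ?dvdn_exp2l // -red_map h subrr.
move/matrixP: e => /(_ i j); rewrite !mxE.
by move/(rZ_ker (pX_gt1 p_gt1 s)).
Qed.

Lemma GL1_ker (a : fam) t : GL1 a -> Pdiv 1 (a t - 1%:M).
Proof.
move=> [ca a0] i j; have e : map_mx (rZ (p ^ 1)) (a t - 1%:M) = 0.
  rewrite rZ_mxB ?pX_gt1 ?dvdn_exp2l // rZ_mx1 ?pX_gt1 ?dvdn_exp2l //.
  by rewrite redchain // a0 subrr.
move/matrixP: e => /(_ i j); rewrite !mxE.
by move/(rZ_ker (pX_gt1 p_gt1 0)).
Qed.


Definition Kt (t : nat) (x : fam) := GL1 x /\ forall i, (i < t)%N -> x i = 1%:M.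

Lemma Kt_sg t : subgroup (Kt t).
Proof.
split; first by move=> x [].
split; first by split; [exact: GL1_1 | by []].
split.
  move=> x y [gx hx] [gy hy]; split; first exact: GL1_M.
  by move=> i lt; rewrite /famM hx // hy // mulmx1.
move=> x [gx hx]; split; first exact: GL1_V.
by move=> i lt; rewrite /famV hx // invmx1.
Qed.

Lemma Kt_cl t : subs (pclosure (Kt t)) (Kt t).
Proof.
move=> x [gx hx]; split => // i lt.
by have [y [[_ hy] e]] := hx i; rewrite -e hy.
Qed.

Lemma iter1 k n : iter k (fun z => (1%:M : 'M['Z_(p ^ n.+1)]_m) *m z) 1%:M = 1%:M.
Proof. by elim: k => //= k ->; rewrite mul1mx. Qed.

Lemma Kt_pow t x : Kt t.+1 x -> Kt t.+2 (famX x p).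
Proof.
move=> [gx hx]; split; first exact: GL1_X.
move=> i; rewrite ltnS leq_eqVlt => /orP [/eqP -> | lt]; last first.
  by rewrite /famX hx // iter1.
have [cx _] := gx.
have hD' : Pdiv t.+1 (x t.+1 - 1%:M) by apply: red_ker; rewrite cx hx.
set D := x t.+1 - 1%:M in hD'.
have eX : x t.+1 = 1%:M + D by rewrite /D addrC subrK.
have Dk : forall k, D *m (D *+ k) = 0.
  move=> k; apply: (prod0_mx (u := t.+1) (v := t.+1)).
  - by rewrite -{1}(addn0 t.+1) ltn_add2l.
  - exact: hD'.
  - by apply: Pdiv_mulrn.
have it : forall k, iter k (fun z => x t.+1 *m z) 1%:M = 1%:M + D *+ k.
  elim => [|k IH]; first by rewrite /= addr0.
  rewrite /= IH eX mulmxDl mul1mx mulmxDr mulmx1 Dk addr0 mulrSr.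
  rewrite -addrA. reflexivity.
rewrite /famX it.
suff -> : D *+ p = 0 by rewrite addr0.
apply/matrixP => i0 j0; rewrite mulmxnE [RHS]mxE; apply: mulp0; apply: hD'.
Qed.

Lemma comm_lemma n (A Y : 'M['Z_(p ^ n.+1)]_m) :
  (A - 1%:M) *m (Y - 1%:M) = 0 -> (Y - 1%:M) *m (A - 1%:M) = 0 -> A *m Y = Y *m A.
Proof.
rewrite !mulmxBl !mulmxBr !mulmx1 !mul1mx => /eqP h1 /eqP h2.
move: h1 h2; rewrite !subr_eq0 !subr_eq => /eqP -> /eqP ->.
by rewrite addrC addrA addrAC.
Qed.

Lemma Kt_comm t a y : GL1 a -> Kt t.+1 y -> Kt t.+2 (famC a y).
Proof.
move=> ga [gy hy]; split; first exact: GL1_C.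
have ua := GL1_U p_gt1 ga; have uy := GL1_U p_gt1 gy.
move=> i; rewrite ltnS leq_eqVlt => /orP [/eqP -> | lt]; last first.
  by rewrite /famC /famM /famV hy // invmx1 mulmx1 mulmx1 mulVmx ?ua.
have [cy _] := gy.
have hD' : Pdiv t.+1 (y t.+1 - 1%:M) by apply: red_ker; rewrite cy hy.
set D := y t.+1 - 1%:M in hD'.
have hE := GL1_ker t.+1 ga; set E := a t.+1 - 1%:M in hE.
have eY : y t.+1 = 1%:M + D by rewrite /D addrC subrK.
have eA : a t.+1 = 1%:M + E by rewrite /E addrC subrK.
have ED : E *m D = 0 by apply: (prod0_mx (u := 1) (v := t.+1)).
have DE : D *m E = 0.
  by apply: (prod0_mx (u := t.+1) (v := 1)); rewrite // addn1.
have com : a t.+1 *m y t.+1 = y t.+1 *m a t.+1.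
  apply: comm_lemma; [exact: ED | exact: DE].
have uyt := uy t.+1; have uat := ua t.+1.
rewrite /famC /famM /famV com mulmxA -(mulmxA _ (invmx (y t.+1))) mulVmx //.
by rewrite mulmx1 mulVmx.
Qed.
End Kt.


Lemma inIn (T : eqType) (x : T) s : x \in s -> List.In x s.
Proof.
elim: s => //= a s IH; rewrite inE => /orP [/eqP ->|/IH]; [by left | by right].
Qed.

Section Open.
Variables (p m : nat) (G : fset p m).
Hypotheses (p_gt1 : (1 < p)%N) (sG : subgroup G) (cG : pclosed G).
Local Notation fam := (fam p m).
Local Notation fam1 := (fam1 p m).
Local Notation U := (@U p m).
Local Notation GL1 := (@GL1 p m).
Local Notation fset := (fset p m).
Local Notation subgroup := (@subgroup p m).
Local Notation pclosure := (@pclosure p m).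
Local Notation cgen := (@cgen p m).
Local Notation subs := (@subs p m).
Local Notation congr := (@congr p m).
Local Notation P := (pser G).

Let Psg := pser_sg p_gt1 sG cG.
Let PG := pser_G p_gt1 sG cG.
Let Pcl := pser_cl p_gt1 sG cG.
Let Pnrm := pser_nrm p_gt1 sG cG.
Let Ppw := pser_pw p_gt1 sG cG.
Let Pcomm := pser_comm p_gt1 sG cG.
Let uG := sg_U p_gt1 sG.

Lemma D0 : topfingen G -> exists D, (forall d, List.In d D -> P 0 d) /\
  forall z, P 0 z -> exists d, List.In d D /\ congr (P 1) z d.
Proof.
move=> [r [f hf]].
pose f' i := if excluded_middle_informative (GL1 (f i)) then f i else fam1.
have f'G : forall i, G (f' i).
  move=> i; rewrite /f'; case: excluded_middle_informative => gi.
    by apply/hf; apply: cgen_ext => //; exists i.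
  exact: (sg_1 sG).
have Gsub : subs G (cgen (fun x => exists i, x = f' i)).
  move=> z /hf; apply: cgen_min; [exact: cgen_sg | exact: cgen_cl|].
  move=> y [[i ->] gi]; apply: cgen_ext => //; exists i.
  by rewrite /f'; case: excluded_middle_informative.
exists (List.map (fun phi : {ffun 'I_r -> 'I_p} => lincomb f' (fun i => nat_of_ord (phi i)))
   (enum {ffun 'I_r -> 'I_p})).
split.
  move=> d /List.in_map_iff [phi [<- _]]; rewrite lincomb_lc; exact: (lc_K sG f'G).
move=> z Gz.
have [e [be ce]] := span_main p_gt1 sG (Psg 1) (@Pnrm 1) (@Ppw 0) (@Pcomm 0) f'G (@Pcl 1) (Gsub z Gz).
exists (lincomb f' e); split => //.
have -> : e = (fun i => nat_of_ord ([ffun i => Ordinal (be i)] i)).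
  by apply: functional_extensionality => i; rewrite ffunE.
apply: List.in_map; apply: inIn; exact: mem_enum.
Qed.


Definition Dprop j (D : seq fam) := (forall d, List.In d D -> P j d) /\
  forall z, P j z -> exists d, List.In d D /\ congr (P j.+1) z d.

Lemma Dstep j D : ppow_iso G j.+1 -> Dprop j D -> Dprop j.+1 (List.map (fun d => famX d p) D).
Proof.
move=> [h1 [h2 [_ [_ h5]]]] [HD1 HD2]; split.
  by move=> d' /List.in_map_iff [d [<- Id]]; apply: h1; apply: HD1.
move=> z Bz; have [x [Ax cx]] := h5 z Bz.
have [d [Id cd]] := HD2 x Ax.
have cxd := h2 x d Ax (HD1 d Id) cd.
exists (famX d p); split; first by apply: List.in_map.
have Gx : G x by apply: PG Ax.
have Gd : G d by apply: PG; apply: HD1.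
apply: (cg_trans p_gt1 sG (Psg j.+2) (y := famX x p)) => //.
- by apply: PG Bz.
- exact: (sg_X sG).
- exact: (sg_X sG).
- by apply: (cg_sym p_gt1 sG (Psg j.+2)) => //; [exact: (sg_X sG) | apply: PG Bz].
Qed.

Lemma Dall : topfingen G -> (forall n, (1 <= n)%N -> ppow_iso G n) ->
  forall j, exists D, Dprop j D.
Proof.
move=> tf hpp; elim => [|j [D HD]]; first exact: D0.
by exists (List.map (fun d => famX d p) D); apply: Dstep => //; apply: hpp.
Qed.

Lemma Reps : topfingen G -> (forall n, (1 <= n)%N -> ppow_iso G n) ->
  forall j, exists R, (forall c, List.In c R -> G c) /\
    forall x, G x -> exists c, List.In c R /\ congr (P j) x c.
Proof.
move=> tf hpp; elim => [|j [R [HR1 HR2]]].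
  exists [:: fam1]; split; first by move=> c [<-|[]]; exact: (sg_1 sG).
  by move=> x Gx; exists fam1; split; [left | rewrite /congr famV1 famM1x].
have [D [HD1 HD2]] := Dall tf hpp j.
exists (List.flat_map (fun c => List.map (famM c) D) R); split.
  move=> c' /List.in_flat_map [c [Ic /List.in_map_iff [d [<- Id]]]].
  by apply: (sg_M sG); [apply: HR1 | apply: PG; apply: HD1].
move=> x Gx; have [c [Ic cc]] := HR2 x Gx.
have [d [Id cd]] := HD2 _ cc.
exists (famM c d); split.
  by apply/List.in_flat_map; exists c; split => //; apply: List.in_map.
have uc := uG (HR1 c Ic); have ud := uG (PG (HD1 d Id)).
by rewrite /congr famVM // famMA.
Qed.

Definition Pc j (c : fam) N := forall x, GL1 x -> P j (famM (famV c) x) -> x N = 1%:M -> P j c.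

Lemma Pc_mono j c N N' : Pc j c N -> (N <= N')%N -> Pc j c N'.
Proof. by move=> h le x gx hx xN; apply: (h x gx hx); apply: (lvl_down p_gt1 gx xN le). Qed.

Lemma Pc_ex j c : G c -> exists N, Pc j c N.
Proof.
move=> Gc; case: (classic (P j c)) => [Pjc|nPjc].
  by exists 0%N => x _ _ _.
apply: NNPP => hn; apply: nPjc.
have hN : forall N, exists x, GL1 x /\ P j (famM (famV c) x) /\ x N = 1%:M.
  move=> N; apply: NNPP => hx; apply: hn; exists N => x gx h1 h2.
  by case: hx; exists x.
apply: (sg_Vinv (Psg j)); apply: Pcl; split.
  apply: (GL1_V p_gt1); apply: (sg_GL1 sG Gc).
move=> n; have [x [gx [h1 h2]]] := hN n.
by exists (famM (famV c) x); split => //; rewrite /famM h2 mulmx1.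
Qed.

Lemma Pc_list j R : (forall c, List.In c R -> G c) ->
  exists N, forall c, List.In c R -> Pc j c N.
Proof.
elim: R => [|c R IH] HR; first by exists 0%N.
have [N1 h1] := Pc_ex j (HR c (or_introl erefl)).
have [N2 h2] := IH (fun c' h => HR c' (or_intror h)).
exists (maxn N1 N2) => c' [<-|Ic'].
  by apply: (Pc_mono h1); rewrite leq_maxl.
by apply: (Pc_mono (h2 c' Ic')); rewrite leq_maxr.
Qed.

Lemma P_open : topfingen G -> (forall n, (1 <= n)%N -> ppow_iso G n) ->
  forall j, exists N, forall x, G x -> x N = 1%:M -> P j x.
Proof.
move=> tf hpp j; have [R [HR1 HR2]] := Reps tf hpp j.
have [N hN] := Pc_list j HR1.
exists N => x Gx xN; have [c [Ic cc]] := HR2 x Gx.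
have Pjc := hN c Ic x (sg_GL1 sG Gx) cc xN.
have -> : x = famM c (famM (famV c) x).
  by rewrite -famMA famMxV ?famM1x //; apply: uG; apply: HR1.
exact: (sg_M (Psg j)).
Qed.

Lemma P_Kt j : subs (P j) (Kt j.+1).
Proof.
elim: j => [|j IH].
  move=> x Gx; split; first exact: (sg_GL1 sG Gx).
  by move=> i; rewrite ltnS leqn0 => /eqP ->; case: (sg_GL1 sG Gx).
apply: cgen_min; [exact: Kt_sg | exact: Kt_cl |].
move=> y [[[x [Px ->]] | [a [z [Ga [Pz ->]]]]] _].
  by apply: Kt_pow => //; apply: IH.
apply: Kt_comm => //; [exact: (sg_GL1 sG Ga) | exact: IH].
Qed.

End Open.

Local Close Scope ring_scope.
Theorem mainTheorem6 (p m : nat) (G : fset p m) (k s : nat) (g : 'I_s -> fam p m) :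
  prime p -> odd p ->
  subgroup G -> pclosed G -> uniform G ->
  (1 <= k)%N ->
  (forall i, Gn G k (g i)) ->
  lin_indep (Gn G k) (Gn G k.+1) g ->
  let G' := cgen (fun x => exists i, x = g i) in
  let Gb := fun n => fsetI G' (Gn G (n + k - 1)) in
  (* (i) *)
  (dp_eq G' s /\ seteq (Gb 2%N) (Phi G')) /\
  (* (ii) *)
  (forall n, (1 <= n)%N ->
     normal_in (Gb n) G' /\
     subs (Gb n.+1) (Gb n) /\
     (forall x, Gb n x -> Gb n.+1 (famX x p)) /\
     (forall x y, Gb n x -> Gb n y -> Gb n.+1 (famC x y)) /\
     (forall x y, G' x -> Gb n y -> congr (Gb n.+1) (famM (famM (famV x) y) x) y)) /\
  (* (iii) *)
  (forall n, (1 <= n)%N -> open_in (Gb n) G') /\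
  (forall x, (forall n, (1 <= n)%N -> Gb n x) -> x = fam1 p m).
Proof.
move=> pp _ sG cG [tf [_ hpp]]; case: k => // k _ gk li G' Gb.
have p_gt1 := prime_gt1 pp.
have Psg := pser_sg p_gt1 sG cG.
have PG := pser_G p_gt1 sG cG.
have Pcl := pser_cl p_gt1 sG cG.
have Pnrm := pser_nrm p_gt1 sG cG.
have Ppw := pser_pw p_gt1 sG cG.
have Pcomm := pser_comm p_gt1 sG cG.
have Pnest := pser_nest p_gt1 sG cG.
have gG : forall i, GL1 (g i) by move=> i; apply: (sg_GL1 sG); apply: PG; apply: gk.
have sG' : subgroup G' := cgen_sg p_gt1 _.
have cG' : subs (pclosure G') G' := @cgen_cl _ _ _.
have G'g : forall i, G' (g i) by move=> i; apply: cgen_ext => //; exists i.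
have G'P : subs G' (pser G k).
  by apply: cgen_min; [exact: Psg | exact: Pcl | move=> y [[i ->] _]; apply: gk].
have G'G : subs G' G by move=> x /G'P /PG.
have uG' := sg_U p_gt1 sG'.
have goodG' : good G' G'.
  split => //; split => //; split => //; move=> c y; exact: (sg_conj sG').
have [[sPhi [cPhi [PhiG' nPhi]]] [_ [pwPhi commPhi]]] := pcomm_good p_gt1 sG' goodG'.
have PhiPk : subs (Phi G') (pser G k.+1).
  apply: cgen_min; [exact: Psg | exact: Pcl |].
  move=> y [[[x [G'x ->]] | [x [z [G'x [G'z ->]]]]] _].
    by apply: Ppw; exists x; split => //; apply: G'P.
  by apply: Pcomm; exists x, z; split; [apply: G'G | split => //; apply: G'P].
have ix : forall n, ((n.+1 + k.+1 - 1).-1 = n + k)%N by move=> n; lia.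
split; [split|split; [|split]].
- exists g; split => //; split.
    by move=> e be Phe i; apply: li e be (PhiPk _ Phe) i.
  move=> x G'x.
  have [e [be ce]] := span_main p_gt1 sG' sPhi nPhi pwPhi commPhi G'g cPhi G'x.
  by exists e.
- move=> x; rewrite /Gb /Gn (ix 1%N) add1n; split.
  + move=> [G'x Px].
    have [e [be ce]] := span_main p_gt1 sG' sPhi nPhi pwPhi commPhi G'g cPhi G'x.
    set L := lincomb g e in ce.
    have G'L : G' L by rewrite /L lincomb_lc; apply: lc_K.
    have PL : pser G k.+1 L.
      have -> : L = famM x (famV (famM (famV L) x)).
        rewrite (famVM (UV (uG' _ G'L)) (uG' _ G'x)) famVK -famMA famMxV ?famM1x //.
        exact: uG'.
      apply: (sg_M (Psg _)) => //; apply: (sg_V (Psg _)); exact: PhiPk.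
    have e0 := li e be PL.
    have eL : L = fam1 p m.
      rewrite /L lincomb_lc.
      have -> : e = (fun _ => 0%N) by apply: functional_extensionality.
      exact: lc_0.
    by move: ce; rewrite eL /congr famV1 famM1x.
  + by move=> Px; split; [apply: PhiG' | apply: PhiPk].
- case=> // n _; rewrite /Gb /Gn ix (ix n.+1) addSn.
  split.
    move=> c y G'c [G'y Py]; split; first exact: (sg_conj sG').
    by apply: Pnrm => //; apply: G'G.
  split; first by move=> y [G'y Py]; split => //; apply: Pnest.
  split.
    move=> x [G'x Px]; split; first exact: (sg_X sG').
    by apply: Ppw; exists x.
  split.
    move=> x y [G'x Px] [G'y Py]; split; first exact: (sg_C sG').
    by apply: Pcomm; exists x, y; split => //; apply: G'G.
  move=> x y G'x [G'y Py]; rewrite /congr.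
  have -> : famM (famV y) (famM (famM (famV x) y) x) = famV (famC x y).
    by rewrite (famVC (uG' _ G'x) (uG' _ G'y)) /famC !famMA.
  split.
    by apply: (sg_V sG'); apply: (sg_C sG').
  by apply: (sg_V (Psg _)); apply: Pcomm; exists x, y; split => //; apply: G'G.
- case=> // n _; rewrite /Gb /Gn ix.
  have [N hN] := P_open p_gt1 sG cG tf hpp (n + k).
  by exists N => x G'x xN; split => //; apply: hN => //; apply: G'G.
- move=> x hx; apply: functional_extensionality_dep => t.
  have := hx t.+1 isT; rewrite /Gb /Gn ix => -[_ Px].
  have [_ Kx] := P_Kt p_gt1 sG Px.
  by apply: Kx; rewrite ltnS leq_addr.
Qed.
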